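(* Fix $C<1$. For every $\epsilon>0$ there are positive constants $D$ and $N$ such that \[ \mathbb{P}(\#\mathcal{E}_i\ge\epsilon n)\le D\frac{(\log n)^3}{n^2} \] for all $n\ge N$ and all $1\le i\le n$.
   Context: Let $C>0$ be a constant and $(\alpha_n)_{n\ge1}$ a sequence of nonnegative reals with $\alpha_n\to0$. For each $n$, consider the complete graph $K_n$ on vertex set $\{1,\dots,n\}$; each edge $e$ of $K_n$ is independently open with probability $p_n(e)$ and closed otherwise, where $\frac{C-\alpha_n}{n}\le p_n(e)\le\frac{C+\alpha_n}{n}$ for every edge $e$. Let $G$ be the resulting random graph of open edges, with probability measure $\mathbb{P}$. For a vertex $i$, $\mathcal{E}_i$ denotes the open component of $G$ containing $i$ (the set of vertices joined to $i$ by a path of open edges, together with $i$ itself), and $\#\mathcal{E}_i$ its number of vertices. $\log$ is the natural logarithm. *)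

(* Defs.v *)
From HB Require Import structures.
From mathcomp Require Import all_boot all_order all_algebra.
From mathcomp Require Import all_classical all_reals all_analysis.
Set Implicit Arguments. Unset Strict Implicit. Unset Printing Implicit Defensive.
Import Order.TTheory GRing.Theory Num.Theory.
Local Open Scope ring_scope.

Definition edge (n : nat) := {e : {set 'I_n} | #|e| == 2%N}.

(* A configuration assigns to each edge "open" (true) or "closed" (false). *)
Definition config (n : nat) := {ffun edge n -> bool}.

Definition cfg_weight (R : realType) (n : nat) (p : edge n -> R) (w : config n) : R :=
  \prod_(e : edge n) (if w e then p e else 1 - p e).

Definition Prob (R : realType) (n : nat) (p : edge n -> R) (A : pred (config n)) : R :=
  \sum_(w : config n | A w) cfg_weight p w.

Definition open_adjacent (n : nat) (w : config n) : rel 'I_n :=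
  fun x y => [exists e : edge n, w e && (val e == [set x; y])].

Definition open_component (n : nat) (w : config n) (i : 'I_n) : {set 'I_n} :=
  [set y | connect (open_adjacent w) i y].

(* Main.v *)
Require Import Defs.
From HB Require Import structures.
From mathcomp Require Import all_boot all_order all_algebra.
From mathcomp Require Import all_classical all_reals all_analysis.
From mathcomp Require Import zify ring lra.
Import Order.TTheory GRing.Theory Num.Theory.
Set Implicit Arguments. Unset Strict Implicit. Unset Printing Implicit Defensive.
Local Open Scope ring_scope.

Fixpoint elist (n : nat) (x : 'I_n) (s : seq 'I_n) : seq (edge n) :=
  match s with
  | [::] => [::]
  | y :: s' => match (insub [set x; y] : option (edge n)) with
               | Some e => e :: elist y s'
               | None => elist y s'
               end
  end.

Lemma elist_sub n (x : 'I_n) s e : e \in elist x s -> {subset val e <= x :: s}.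
Proof.
elim: s x => [|y s IH] x //=.
case: insubP => [e0 _ He0|_].
  rewrite inE => /orP [/eqP -> | /IH H] v.
    by rewrite He0 !inE => /orP [->|->]; rewrite ?orbT.
  by move=> /H Hv; rewrite inE Hv orbT.
by move=> /IH H v /H Hv; rewrite inE Hv orbT.
Qed.

Lemma elist_snd n (x : 'I_n) s e : e \in elist x s -> exists2 v, v \in val e & v \in s.
Proof.
elim: s x => [|y s IH] x //=.
case: insubP => [e0 _ He0|_].
  rewrite inE => /orP [/eqP -> | /IH [v H1 H2]].
    by exists y; rewrite ?He0 !inE eqxx ?orbT.
  by exists v; rewrite // inE H2 orbT.
by move=> /IH [v H1 H2]; exists v; rewrite // inE H2 orbT.
Qed.

Lemma elist_uniq n (x : 'I_n) s : uniq (x :: s) -> uniq (elist x s).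
Proof.
elim: s x => [|y s IH] x //= /andP [Hx Hu].
case: insubP => [e0 _ He0|_]; last by apply: IH.
rewrite /= IH // andbT; apply/negP => /elist_sub H.
have : x \in val e0 by rewrite He0 !inE eqxx.
by move=> /H; rewrite (negbTE Hx).
Qed.

Lemma elist_size n (x : 'I_n) s : uniq (x :: s) -> size (elist x s) = size s.
Proof.
elim: s x => [|y s IH] x //= /andP [Hx Hu].
have Hc : #|[set x; y]| == 2%N.
  by rewrite cards2; move: Hx; rewrite inE negb_or => /andP [-> _].
by rewrite insubT /= IH.
Qed.

Lemma elist_open n (w : config n) (x : 'I_n) s :
  path (open_adjacent w) x s -> all (fun e => w e) (elist x s).
Proof.
elim: s x => [|y s IH] x //= /andP [Hxy Hp].
case: insubP => [e0 _ He0|_]; last by apply: IH.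
rewrite /= IH // andbT.
move: Hxy => /existsP [e /andP [we /eqP ve]].
by have -> : e0 = e by apply: val_inj; rewrite He0 ve.
Qed.

Lemma path_suffix (T : eqType) (e : rel T) (A : pred T) x q :
  A x -> path e x q ->
  exists z zs, [/\ A z, path e z zs, last z zs = last x q,
     all (fun v => ~~ A v) zs & subseq zs q].
Proof.
move=> Ax; elim/last_ind: q => [|q h IH].
  by move=> _; exists x, [::]; split.
rewrite rcons_path => /andP [Hp He].
have [z [zs [Az Pz Lz Az' Sz]]] := IH Hp.
case Ah: (A h).
  by exists h, [::]; split => //; rewrite ?last_rcons // sub0seq.
exists z, (rcons zs h); split.
- by [].
- by rewrite rcons_path Pz Lz.
- by rewrite !last_rcons.
- by rewrite all_rcons Ah.
- by rewrite -!cats1 cat_subseq // subseq_refl.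
Qed.

Lemma split_last (T : eqType) (i z : T) s : z \in i :: s ->
  exists xs ys, s = xs ++ ys /\ last i xs = z.
Proof.
elim: s i => [|y s IH] i.
  by rewrite inE => /eqP ->; exists [::], [::].
rewrite inE => /orP [/eqP ->|/IH [xs [ys [-> <-]]]].
  by exists [::], (y :: s).
by exists (y :: xs), ys.
Qed.

Lemma ler_sum_term (R : realType) (I : finType) (k : I) (F : I -> R) :
  (forall k, 0 <= F k) -> F k <= \sum_k F k.
Proof. by move=> H; rewrite (bigD1 k) //= lerDl sumr_ge0. Qed.

Definition Gt (R : realType) n (i j l : 'I_n) (xs ys zs : seq 'I_n) : R :=
  (uniq (i :: xs ++ ys ++ zs) && (last (last i xs) ys == j)
     && (last (last i xs) zs == l))%:R.

Definition Lw n (i : 'I_n) (xs ys zs : seq 'I_n) :=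
  elist i (xs ++ ys) ++ elist (last i xs) zs.

Definition Wt (R : realType) n (i j l : 'I_n) (w : config n) : R :=
  \sum_(a < n) \sum_(xs : a.-tuple 'I_n) \sum_(b < n) \sum_(ys : b.-tuple 'I_n)
  \sum_(r < n) \sum_(zs : r.-tuple 'I_n)
     Gt R i j l xs ys zs * \prod_(e <- Lw i xs ys zs) (w e)%:R.

Lemma Gt_ge0 (R : realType) n (i j l : 'I_n) xs ys zs : 0 <= Gt R i j l xs ys zs.
Proof. by rewrite /Gt ler0n. Qed.

Lemma prod_ind_ge0 (R : realType) n (w : config n) (L : seq (edge n)) :
  0 <= \prod_(e <- L) ((w e)%:R : R).
Proof. by apply: prodr_ge0 => e _; rewrite ler0n. Qed.

Lemma Wt_ge0 (R : realType) n (i j l : 'I_n) w : 0 <= Wt R i j l w.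
Proof.
by do 6 (apply: sumr_ge0 => ? _); apply: mulr_ge0; [apply: Gt_ge0|apply: prod_ind_ge0].
Qed.

Lemma size_lt_n n (s : seq 'I_n) : uniq s -> (size s <= n)%N.
Proof.
move=> U; rewrite -(card_uniqP U).
by rewrite -[n in (_ <= n)%N]card_ord max_card.
Qed.

Lemma witness (R : realType) n (i j l : 'I_n) (w : config n) :
  connect (open_adjacent w) i j -> connect (open_adjacent w) i l ->
  1 <= Wt R i j l w.
Proof.
move=> /connectP [p0 Hp0 ->] /connectP [t0 Ht0 ->].
case: (shortenP Hp0) => s Ps Us _.
case: (shortenP Ht0) => t Pt Ut _.
have [z [zs [Az Pz Lz Az' Sz]]] := path_suffix (A := mem (i :: s)) (mem_head i s) Pt.
have Uzs : uniq zs.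
  by move: Ut => /andP [_ Ut']; apply: (subseq_uniq Sz Ut').
have [xs [ys [Es Lx]]] := split_last Az.
have U : uniq (i :: xs ++ ys ++ zs).
  rewrite catA -Es -cat_cons cat_uniq Us Uzs andbT.
  apply/hasPn => v Hv; exact: (allP Az' v Hv).
have Ha : (size xs < n)%N.
  have := size_lt_n U; rewrite /= !size_cat; lia.
have Hb : (size ys < n)%N.
  have := size_lt_n U; rewrite /= !size_cat; lia.
have Hr : (size zs < n)%N.
  have := size_lt_n U; rewrite /= !size_cat; lia.
rewrite /Wt.
apply: (le_trans _ (ler_sum_term (Ordinal Ha) _)); last first.
  by move=> *; do 5 (apply: sumr_ge0 => ? _); apply: mulr_ge0; [apply: Gt_ge0|apply: prod_ind_ge0].
apply: (le_trans _ (ler_sum_term (in_tuple xs) _)); last first.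
  by move=> *; do 4 (apply: sumr_ge0 => ? _); apply: mulr_ge0; [apply: Gt_ge0|apply: prod_ind_ge0].
apply: (le_trans _ (ler_sum_term (Ordinal Hb) _)); last first.
  by move=> *; do 3 (apply: sumr_ge0 => ? _); apply: mulr_ge0; [apply: Gt_ge0|apply: prod_ind_ge0].
apply: (le_trans _ (ler_sum_term (in_tuple ys) _)); last first.
  by move=> *; do 2 (apply: sumr_ge0 => ? _); apply: mulr_ge0; [apply: Gt_ge0|apply: prod_ind_ge0].
apply: (le_trans _ (ler_sum_term (Ordinal Hr) _)); last first.
  by move=> *; do 1 (apply: sumr_ge0 => ? _); apply: mulr_ge0; [apply: Gt_ge0|apply: prod_ind_ge0].
apply: (le_trans _ (ler_sum_term (in_tuple zs) _)); last first.
  by move=> *; apply: mulr_ge0; [apply: Gt_ge0|apply: prod_ind_ge0].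
have Hall : all (fun e => w e) (Lw i xs ys zs).
  by rewrite /Lw all_cat -Es Lx elist_open // elist_open.
have -> : \prod_(e <- Lw i xs ys zs) ((w e)%:R : R) = 1.
  rewrite big_seq big1 // => e He.
  by move/allP: Hall => /(_ e He) ->.
by rewrite /= /Gt U Lx Es last_cat Lx Lz !eqxx mulr1.
Qed.

Lemma Pall (R : realType) n (p : edge n -> R) (L : seq (edge n)) : uniq L ->
  \sum_(w : config n) cfg_weight p w * \prod_(e <- L) ((w e)%:R : R)
  = \prod_(e <- L) p e.
Proof.
move=> UL.
pose F := fun (e : edge n) (b : bool) =>
   ((if b then p e else 1 - p e) * (if e \in L then (b%:R : R) else 1)).
transitivity (\sum_(w : config n) \prod_(e : edge n) F e (w e)).
  apply: eq_bigr => w _; rewrite /cfg_weight /F big_split /= (big_uniq L) //.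
  by rewrite (big_mkcond (fun e => e \in L)).
transitivity (\prod_(e : edge n) \sum_(b : bool) F e b).
  by rewrite bigA_distr_bigA.
rewrite (big_uniq L) // (big_mkcond (fun e => e \in L)) /=.
apply: eq_bigr => e _; rewrite big_bool /F /=.
by case: (e \in L); rewrite ?mulr1 ?mulr0 ?addr0 // addrC subrK.
Qed.

Lemma prod_le (R : realType) n (p : edge n -> R) (q : R) (L : seq (edge n)) :
  (forall e, 0 <= p e <= q) -> \prod_(e <- L) p e <= q ^+ size L.
Proof.
move=> H; elim: L => [|e L IH]; first by rewrite big_nil expr0.
rewrite big_cons /= exprS; have /andP [H1 H2] := H e.
by apply: ler_pM => //; apply: prodr_ge0 => x _; case/andP: (H x).
Qed.

Lemma Lw_prop n (i : 'I_n) (xs ys zs : seq 'I_n) :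
  uniq (i :: xs ++ ys ++ zs) ->
  uniq (Lw i xs ys zs) /\ size (Lw i xs ys zs) = (size xs + size ys + size zs)%N.
Proof.
move=> U.
have U' : uniq ((i :: xs ++ ys) ++ zs) by rewrite cat_cons -catA.
move: (U'); rewrite cat_uniq => /and3P [U1 Hd U3].
have Hz : last i xs \in i :: xs ++ ys.
  have := mem_last i xs; rewrite !inE mem_cat => /orP [->//|->]; by rewrite !orbT.
have U2 : uniq (last i xs :: zs).
  rewrite /= U3 andbT; apply/negP => Hzz.
  by move/hasPn: Hd => /(_ _ Hzz); rewrite Hz.
split.
  rewrite /Lw cat_uniq elist_uniq // elist_uniq // andbT.
  apply/hasPn => e He; apply/negP => He'.
  have [v Hv1 Hv2] := elist_snd He.
  have := elist_sub He' Hv1 => Hv3.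
  by move/hasPn: Hd => /(_ _ Hv2); rewrite Hv3.
by rewrite /Lw size_cat !elist_size // size_cat.
Qed.

Lemma pullE (R : realType) (W K : finType) (g : W -> R) (F : K -> W -> R) :
  \sum_(w : W) g w * \sum_(k : K) F k w = \sum_(k : K) \sum_(w : W) g w * F k w.
Proof. under eq_bigr do rewrite mulr_sumr. exact: exchange_big. Qed.

Lemma pull2 (R : realType) (I J K : finType) (F : I -> J -> K -> R) :
  \sum_(i : I) \sum_(j : J) \sum_(k : K) F i j k
  = \sum_(k : K) \sum_(i : I) \sum_(j : J) F i j k.
Proof. under eq_bigr do rewrite exchange_big. exact: exchange_big. Qed.

Lemma tupsum (R : realType) n (q c X : R) : q * n%:R = c ->
  \sum_(r < n) \sum_(zs : r.-tuple 'I_n) X * q ^+ r = X * \sum_(r < n) c ^+ r.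
Proof.
move=> Hq; rewrite mulr_sumr; apply: eq_bigr => r _.
rewrite sumr_const card_tuple card_ord -mulr_natr natrX -mulrA -exprMn Hq //.
Qed.

Lemma sumG (R : realType) n (b : bool) (u v : 'I_n) :
  \sum_(j : 'I_n) \sum_(l : 'I_n) ((b && (u == j) && (v == l))%:R : R) <= 1.
Proof.
rewrite (bigD1 u) //= [X in _ + X]big1 ?addr0; last first.
  move=> j Hj; apply: big1 => l _.
  by rewrite (eq_sym u) (negbTE Hj) andbF.
rewrite (bigD1 v) //= [X in _ + X]big1 ?addr0; last first.
  by move=> l Hl; rewrite (eq_sym v) (negbTE Hl) andbF.
by rewrite !eqxx !andbT; case: b.
Qed.

Lemma claim2 (R : realType) n (p : edge n -> R) (q c : R) (i : 'I_n) :
  (forall e, 0 <= p e <= q) -> q * n%:R = c -> 0 <= q ->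
  \sum_(w : config n) cfg_weight p w * (\sum_j \sum_l Wt R i j l w)
    <= (\sum_(a < n) c ^+ a) ^+ 3.
Proof.
move=> Hp Hq q0.
rewrite pullE.
under eq_bigr do rewrite pullE.
rewrite /Wt.
under eq_bigr do under eq_bigr do rewrite pullE.
under eq_bigr do under eq_bigr do under eq_bigr do rewrite pullE.
under eq_bigr do under eq_bigr do under eq_bigr do under eq_bigr do rewrite pullE.
under eq_bigr do under eq_bigr do under eq_bigr do under eq_bigr do under eq_bigr do rewrite pullE.
under eq_bigr do under eq_bigr do under eq_bigr do under eq_bigr do under eq_bigr do under eq_bigr do rewrite pullE.
under eq_bigr do under eq_bigr do under eq_bigr do under eq_bigr do under eq_bigr do under eq_bigr do under eq_bigr do rewrite pullE.
apply: (le_trans (y := \sum_(j : 'I_n) \sum_(l : 'I_n) \sum_(a < n) \sum_(xs : a.-tuple 'I_n)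
   \sum_(b < n) \sum_(ys : b.-tuple 'I_n) \sum_(r < n) \sum_(zs : r.-tuple 'I_n)
     Gt R i j l xs ys zs * q ^+ (a + b + r))).
  apply: ler_sum => j _; apply: ler_sum => l _; apply: ler_sum => a _.
  apply: ler_sum => xs _; apply: ler_sum => b _; apply: ler_sum => ys _.
  apply: ler_sum => r _; apply: ler_sum => zs _.
  under eq_bigr do rewrite mulrCA.
  rewrite -mulr_sumr.
  case Hu: (uniq (i :: xs ++ ys ++ zs)); last by rewrite /Gt Hu /= !mul0r.
  apply: ler_wpM2l; first exact: Gt_ge0.
  have [UL SL] := Lw_prop Hu.
  rewrite Pall //; apply: (le_trans (prod_le _ Hp)).
  by rewrite SL !size_tuple.
rewrite pull2.
under eq_bigr do rewrite pull2.
under eq_bigr do under eq_bigr do rewrite pull2.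
under eq_bigr do under eq_bigr do under eq_bigr do rewrite pull2.
under eq_bigr do under eq_bigr do under eq_bigr do under eq_bigr do rewrite pull2.
under eq_bigr do under eq_bigr do under eq_bigr do under eq_bigr do under eq_bigr do rewrite pull2.
apply: (le_trans (y := \sum_(a < n) \sum_(xs : a.-tuple 'I_n)
   \sum_(b < n) \sum_(ys : b.-tuple 'I_n) \sum_(r < n) \sum_(zs : r.-tuple 'I_n)
     q ^+ (a + b + r))).
  apply: ler_sum => a _.
  apply: ler_sum => xs _; apply: ler_sum => b _; apply: ler_sum => ys _.
  apply: ler_sum => r _; apply: ler_sum => zs _.
  under eq_bigr do rewrite -mulr_suml.
  rewrite -mulr_suml; apply: ler_piMl; first by apply: exprn_ge0.
  exact: sumG.
set S := \sum_(a < n) c ^+ a.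
rewrite le_eqVlt; apply/orP; left; apply/eqP.
transitivity (\sum_(a < n) \sum_(xs : a.-tuple 'I_n)
   \sum_(b < n) \sum_(ys : b.-tuple 'I_n) ((q ^+ a * S) * q ^+ b)).
  apply: eq_bigr => a _; apply: eq_bigr => xs _; apply: eq_bigr => b _.
  apply: eq_bigr => ys _.
  under eq_bigr do under eq_bigr do rewrite exprD.
  by rewrite (@tupsum R n q c _ Hq) exprD mulrAC.
rewrite (eq_bigr (fun a : 'I_n => \sum_(xs : a.-tuple 'I_n) (S * S) * q ^+ a)).
  by rewrite (@tupsum R n q c _ Hq) -/S; rewrite !exprS expr0 mulr1 mulrA.
move=> a _; apply: eq_bigr => xs _.
by rewrite (@tupsum R n q c _ Hq) -/S; ring.
Qed.

Lemma weight_ge0 (R : realType) n (p : edge n -> R) (w : config n) :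
  (forall e, 0 <= p e <= 1) -> 0 <= cfg_weight p w.
Proof.
move=> H; apply: prodr_ge0 => e _; have /andP [h1 h2] := H e.
by case: (w e); rewrite ?subr_ge0.
Qed.

Lemma card_sum (R : realType) n (A : {set 'I_n}) :
  (#|A|%:R : R) = \sum_(j : 'I_n) ((j \in A)%:R : R).
Proof.
rewrite -sum1_card natr_sum big_mkcond /=; apply: eq_bigr => j _.
by case: (j \in A).
Qed.

Lemma markov (R : realType) n (p : edge n -> R) (i : 'I_n) (K : R) :
  (forall e, 0 <= p e <= 1) -> 0 < K ->
  Prob p [pred w : config n | K <= #|open_component w i|%:R]
   <= (\sum_(w : config n) cfg_weight p w * (\sum_j \sum_l Wt R i j l w)) / K ^+ 2.
Proof.
move=> Hp K0.
rewrite /Prob big_mkcond /= mulr_suml; apply: ler_sum => w _.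
have Wg : 0 <= cfg_weight p w by apply: weight_ge0.
have Xg : 0 <= \sum_j \sum_l Wt R i j l w.
  by apply: sumr_ge0 => j _; apply: sumr_ge0 => l _; apply: Wt_ge0.
have K2 : 0 < K ^+ 2 by apply: exprn_gt0.
case: ifP => HK; last by rewrite divr_ge0 ?mulr_ge0 // ltW.
rewrite -mulrA; rewrite -[X in X <= _]mulr1; apply: ler_wpM2l => //.
rewrite ler_pdivlMr // mul1r.
set A := open_component w i.
have HA : K ^+ 2 <= #|A|%:R ^+ 2.
  by rewrite !expr2; apply: ler_pM => //; apply: ltW.
apply: (le_trans HA).
rewrite card_sum expr2 mulr_suml; apply: ler_sum => j _.
rewrite mulr_sumr; apply: ler_sum => l _.
case Hj: (j \in A); case Hl: (l \in A); rewrite ?mul0r ?mulr0 ?Wt_ge0 // mul1r.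
by apply: witness; move: Hj Hl; rewrite !inE.
Qed.

Lemma geo (R : realType) (c : R) m : 0 <= c < 1 -> \sum_(a < m) c ^+ a <= (1 - c)^-1.
Proof.
move=> /andP [c0 c1].
have H : (\sum_(a < m) c ^+ a) * (1 - c) = 1 - c ^+ m.
  elim: m => [|m IH]; first by rewrite big_ord0 mul0r expr0 subrr.
  rewrite big_ord_recr /= mulrDl IH exprS; ring.
rewrite -[(1 - c)^-1]mul1r ler_pdivlMr ?subr_gt0 // H.
by rewrite lerBlDr lerDl exprn_ge0.
Qed.

Unset Implicit Arguments.
Local Open Scope classical_set_scope.
Local Open Scope ring_scope.

Theorem lemma7 (R : realType) (C : R) (alpha : nat -> R)
  (p : forall n : nat, edge n -> R) :
  0 < C -> C < 1 ->
  (forall n, 0 <= alpha n) -> alpha n @[n --> \oo] --> (0 : R^o) ->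
  (forall n (e : edge n), 0 <= p n e <= 1) ->
  (forall n (e : edge n),
      (C - alpha n) / n%:R <= p n e <= (C + alpha n) / n%:R) ->
  forall eps : R, 0 < eps ->
  exists D : R, exists N : nat, 0 < D /\ (0 < N)%N /\
    forall n : nat, (N <= n)%N -> forall i : 'I_n,
      Prob (p n) [pred w : config n | eps * n%:R <= #|open_component w i|%:R]
        <= D * (ln (n%:R : R)) ^+ 3 / (n%:R ^+ 2).
Proof.
move=> C0 C1 a0 acvg p01 pb eps eps0.
set c := (1 + C) / 2.
have c0 : 0 <= c by rewrite /c divr_ge0 //; lra.
have c1 : c < 1 by rewrite /c; lra.
have d0 : 0 < (1 - C) / 2 by apply: divr_gt0; lra.
have [N0 HN0] : exists N0, forall n, (N0 <= n)%N -> alpha n < (1 - C) / 2.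
  have := (cvgrPdist_lt _ _).1 acvg _ d0.
  case => N _ HN; exists N => n Hn.
  by have := HN n Hn; rewrite /= sub0r normrN ger0_norm.
set B := ((1 - c)^-1) ^+ 3.
have B0 : 0 < B by apply: exprn_gt0; rewrite invr_gt0 subr_gt0.
have L2 : 0 < ln (2 : R) by apply: ln_gt0; lra.
exists (B / (eps ^+ 2 * ln (2 : R) ^+ 3)), (maxn N0 2).
split; first by apply: divr_gt0 => //; apply: mulr_gt0; apply: exprn_gt0.
split; first by rewrite leq_max orbT.
move=> n Hn i.
have n2 : (2 <= n)%N by move: Hn; rewrite geq_max => /andP [].
have nN0 : (N0 <= n)%N by move: Hn; rewrite geq_max => /andP [].
have nR : 0 < (n%:R : R) by rewrite ltr0n; lia.
set q := c / n%:R.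
have q0 : 0 <= q by rewrite /q divr_ge0 // ltW.
have Hp : forall e, 0 <= p n e <= q.
  move=> e; have /andP [-> _] := p01 n e; have /andP [_ h] := pb n e.
  apply: (le_trans h); rewrite /q ler_pM2r ?invr_gt0 //.
  have := HN0 n nN0; rewrite /c; lra.
have Hq : q * n%:R = c by rewrite /q divfK // gt_eqF.
have K0 : 0 < eps * n%:R by apply: mulr_gt0.
apply: (le_trans (markov i (p01 n) K0)).
have HB : (\sum_(a < n) c ^+ a) ^+ 3 <= B.
  rewrite /B; apply: lerXn2r; rewrite ?nnegrE ?sumr_ge0 ?invr_ge0 ?subr_ge0 //.
  - by move=> a _; apply: exprn_ge0.
  - by apply: ltW.
  - by apply: geo; rewrite c0.
apply: (le_trans (ler_wpM2r _ (le_trans (claim2 i Hp Hq q0) HB))).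
  by rewrite invr_ge0 exprn_ge0 // ltW.
have Ln : ln (2 : R) <= ln (n%:R : R).
  by rewrite ler_ln ?posrE // ?ler_nat //; lra.
have Ln3 : ln (2 : R) ^+ 3 <= ln (n%:R : R) ^+ 3.
  apply: lerXn2r => //; rewrite nnegrE ?(ltW L2) //; exact: (le_trans (ltW L2) Ln).
have -> : B / (eps * n%:R) ^+ 2
   = (B / (eps ^+ 2 * ln (2 : R) ^+ 3)) * ln (2 : R) ^+ 3 / n%:R ^+ 2.
  by field; rewrite ?gt_eqF // ?mulr_gt0 // ?exprn_gt0.
apply: ler_wpM2r; first by rewrite invr_ge0 exprn_ge0 // ltW.
apply: ler_wpM2l => //; apply: ltW; apply: divr_gt0 => //.
by apply: mulr_gt0; apply: exprn_gt0.
Qed.
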